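(* Let $f^{(0)}(w),\dots,f^{(n)}(w)$ be real $C^2$ functions in a Jordan domain in $\mathbb{C}$ (coordinate $w=x+iy$) such that $f^{(0)}_{ww}f^{(0)}_{\bar w\bar w}>0$. Then $f(w,t)=\sum_{m=0}^n f^{(m)}(w)t^m/m!$ satisfies $f_{w\bar w}=t\sqrt{f_{ww}f_{\bar w\bar w}}+o(t^n)$ as $t\to0$ if and only if, for $m=0,\dots,n$, $$f^{(m)}_{w\bar w}=\frac{m\sum_{r=0}^{m-1}\binom{m-1}{r}f^{(r)}_{ww}f^{(m-r-1)}_{\bar w\bar w}-\frac{1}{m+1}\sum_{r=2}^{m-1}\binom{m+1}{r}f^{(r)}_{w\bar w}f^{(m-r+1)}_{w\bar w}}{2^{1-\delta_{m1}}\sqrt{f^{(0)}_{ww}f^{(0)}_{\bar w\bar w}}}.$$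
   Context: Wirtinger derivatives: $f_w=\tfrac12(f_x-if_y)$, $f_{\bar w}=\tfrac12(f_x+if_y)$. $\delta_{mn}=1$ if $m=n$, else $0$; empty sums are $0$. *)

(* Defs.v *)
From Stdlib Require Import Reals Factorial.
From Coquelicot Require Import Coquelicot.
Open Scope R_scope.

Definition jordan_curve (gamma : R -> C) : Prop :=
  (forall s, continuous gamma s) /\
  gamma 0 = gamma 1 /\
  (forall s1 s2, 0 <= s1 < 1 -> 0 <= s2 < 1 -> gamma s1 = gamma s2 -> s1 = s2).

Definition on_curve (gamma : R -> C) (z : C) : Prop :=
  exists s, 0 <= s <= 1 /\ gamma s = z.

Definition joinable_off (gamma : R -> C) (z1 z2 : C) : Prop :=
  exists p : R -> C, (forall s, continuous p s) /\ p 0 = z1 /\ p 1 = z2 /\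
    (forall s, 0 <= s <= 1 -> ~ on_curve gamma (p s)).

(* The interior of the Jordan curve: the points off the curve whose
   (path-)component in the complement of the curve is bounded. *)
Definition jordan_interior (gamma : R -> C) (z : C) : Prop :=
  ~ on_curve gamma z /\
  exists M, forall z', joinable_off gamma z z' -> Cmod z' <= M.

Definition jordan_domain (U : C -> Prop) : Prop :=
  exists gamma, jordan_curve gamma /\ forall z, U z <-> jordan_interior gamma z.

Definition px (f : C -> R) : C -> R := fun z => Derive (fun s => f (s, snd z)) (fst z).
Definition py (f : C -> R) : C -> R := fun z => Derive (fun s => f (fst z, s)) (snd z).

Definition C1_on (U : C -> Prop) (f : C -> R) : Prop :=
  forall z, U z ->
    ex_derive (fun s => f (s, snd z)) (fst z) /\
    ex_derive (fun s => f (fst z, s)) (snd z) /\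
    continuous f z /\ continuous (px f) z /\ continuous (py f) z.

Definition C2_on (U : C -> Prop) (f : C -> R) : Prop :=
  C1_on U f /\ C1_on U (px f) /\ C1_on U (py f).

Definition cx (g : C -> C) : C -> C := fun z =>
  (Derive (fun s => fst (g (s, snd z))) (fst z),
   Derive (fun s => snd (g (s, snd z))) (fst z)).
Definition cy (g : C -> C) : C -> C := fun z =>
  (Derive (fun s => fst (g (fst z, s))) (snd z),
   Derive (fun s => snd (g (fst z, s))) (snd z)).

Definition Dw (g : C -> C) : C -> C := fun z => (/ 2 * (cx g z - Ci * cy g z))%C.
Definition Dwb (g : C -> C) : C -> C := fun z => (/ 2 * (cx g z + Ci * cy g z))%C.

Definition toC (f : C -> R) : C -> C := fun z => RtoC (f z).

Definition f_ww (f : C -> R) : C -> C := Dw (Dw (toC f)).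
Definition f_wbwb (f : C -> R) : C -> C := Dwb (Dwb (toC f)).
Definition f_wwb (f : C -> R) : C -> C := Dwb (Dw (toC f)).

Fixpoint csum (k : nat) (a : nat -> C) : C :=
  match k with
  | O => RtoC 0
  | S k' => (csum k' a + a k')%C
  end.

(* sum over lo <= r < hi, i.e. r = lo, ..., hi-1 (empty if hi <= lo) *)
Definition csum_range (lo hi : nat) (a : nat -> C) : C :=
  csum (hi - lo) (fun j => a (lo + j)%nat).

Definition binom (n k : nat) : R := Binomial.C n k.

Definition ftaylor (fm : nat -> C -> R) (n : nat) (t : R) : C -> R :=
  fun z => sum_f_R0 (fun m => fm m z * t ^ m / INR (fact m)) n.

Definition kdelta (m k : nat) : nat := if Nat.eqb m k then 1%nat else 0%nat.

(* Main.v *)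
Require Import Defs.
From Stdlib Require Import Reals Lra Lia Factorial.
From Coquelicot Require Import Coquelicot.
Open Scope R_scope.

Lemma csum_ext N (a b : nat -> C) : (forall k, (k < N)%nat -> a k = b k) -> csum N a = csum N b.
Proof. induction N; intros H; simpl; auto. rewrite IHN, H; auto. Qed.

Lemma csum_front N (a : nat -> C) : csum (S N) a = (a 0%nat + csum N (fun k => a (S k)))%C.
Proof.
  induction N; simpl.
  - apply injective_projections; simpl; ring.
  - simpl in IHN. rewrite IHN. apply injective_projections; simpl; ring.
Qed.

Lemma csum_scal N c (a : nat -> C) : csum N (fun k => c * a k)%C = (c * csum N a)%C.
Proof. induction N; simpl. apply injective_projections; simpl; ring.
  rewrite IHN. apply injective_projections; simpl; ring. Qed.

Lemma csum_plus N (a b : nat -> C) : csum N (fun k => a k + b k)%C = (csum N a + csum N b)%C.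
Proof. induction N; simpl. apply injective_projections; simpl; ring.
  rewrite IHN. apply injective_projections; simpl; ring. Qed.

Lemma csum_minus N (a b : nat -> C) : csum N (fun k => a k - b k)%C = (csum N a - csum N b)%C.
Proof. induction N; simpl. apply injective_projections; simpl; ring.
  rewrite IHN. apply injective_projections; simpl; ring. Qed.

Lemma csum_zero N (a : nat -> C) : (forall k, (k < N)%nat -> a k = 0%C) -> csum N a = 0%C.
Proof. induction N; intros H; simpl; auto. rewrite IHN, H; auto.
  apply injective_projections; simpl; ring. Qed.

Definition ev (N : nat) (u : nat -> C) (t : R) : C := csum N (fun k => u k * RtoC (t ^ k))%C.
Definition conv (u v : nat -> C) (k : nat) : C := csum (S k) (fun r => u r * v (k - r)%nat)%C.
Definition shift1 (w : nat -> C) (k : nat) : C := match k with O => 0%C | S j => w j end.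

Lemma ev_front N u t : ev (S N) u t = (u 0%nat + RtoC t * ev N (fun k => u (S k)) t)%C.
Proof.
  unfold ev. rewrite csum_front. rewrite <- csum_scal. f_equal.
  - simpl. apply injective_projections; simpl; ring.
  - apply csum_ext. intros k _. simpl.
    apply injective_projections; simpl; ring.
Qed.

Lemma ev_shift1 N w t : ev (S N) (shift1 w) t = (RtoC t * ev N w t)%C.
Proof. rewrite ev_front. simpl. change (fun k => w k) with w. apply injective_projections; simpl; ring. Qed.

Lemma ev_minus N u v t : ev N (fun k => u k - v k)%C t = (ev N u t - ev N v t)%C.
Proof. unfold ev. rewrite <- csum_minus. apply csum_ext. intros.
  apply injective_projections; simpl; ring. Qed.

Lemma ev_plus N u v t : ev N (fun k => u k + v k)%C t = (ev N u t + ev N v t)%C.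
Proof. unfold ev. rewrite <- csum_plus. apply csum_ext. intros.
  apply injective_projections; simpl; ring. Qed.

Lemma ev_scal N c u t : ev N (fun k => c * u k)%C t = (c * ev N u t)%C.
Proof. unfold ev. rewrite <- csum_scal. apply csum_ext. intros.
  apply injective_projections; simpl; ring. Qed.

Lemma ev_ext N u v t : (forall k, (k < N)%nat -> u k = v k) -> ev N u t = ev N v t.
Proof. intros H. unfold ev. apply csum_ext. intros k Hk. rewrite H; auto. Qed.

Lemma ev_zero N (u : nat -> C) t : (forall k, (k < N)%nat -> u k = 0%C) -> ev N u t = 0%C.
Proof. intros H. unfold ev. apply csum_zero. intros k Hk. rewrite H; auto.
  apply Cmult_0_l. Qed.

Definition bigO (K : nat) (f : R -> C) :=
  exists B, forall t, Rabs t <= 1 -> Cmod (f t) <= B * Rabs t ^ K.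
Definition bnd (f : R -> C) := exists B, forall t, Rabs t <= 1 -> Cmod (f t) <= B.
Definition littleo (K : nat) (f : R -> C) :=
  forall eps, 0 < eps -> exists d, 0 < d /\
    forall t, 0 < Rabs t < d -> Cmod (f t) <= eps * Rabs t ^ K.

Lemma pow_abs_le1 t K : Rabs t <= 1 -> 0 <= Rabs t ^ K <= 1.
Proof. intros H. split. apply pow_le, Rabs_pos.
  induction K; simpl. lra. 
  assert (0 <= Rabs t ^ K) by (apply pow_le, Rabs_pos).
  nra. Qed.

Lemma Cmod_RtoC_pow t k : Cmod (RtoC (t ^ k)) = Rabs t ^ k.
Proof. rewrite Cmod_R. symmetry. apply RPow_abs. Qed.

Lemma bigO_ext K f g : (forall t, f t = g t) -> bigO K f -> bigO K g.
Proof. intros E [B HB]. exists B. intros t Ht. rewrite <- E. auto. Qed.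
Lemma bnd_ext f g : (forall t, f t = g t) -> bnd f -> bnd g.
Proof. intros E [B HB]. exists B. intros t Ht. rewrite <- E. auto. Qed.

Lemma bigO_plus K f g : bigO K f -> bigO K g -> bigO K (fun t => f t + g t)%C.
Proof. intros [B1 H1] [B2 H2]. exists (B1 + B2). intros t Ht.
  eapply Rle_trans. apply Cmod_triangle. specialize (H1 t Ht). specialize (H2 t Ht). lra. Qed.

Lemma bigO_opp K f : bigO K f -> bigO K (fun t => - f t)%C.
Proof. intros [B H]. exists B. intros t Ht. rewrite Cmod_opp. auto. Qed.

Lemma bigO_minus K f g : bigO K f -> bigO K g -> bigO K (fun t => f t - g t)%C.
Proof. intros. apply bigO_plus; auto. apply bigO_opp; auto. Qed.

Lemma bigO_mul_bnd K f g : bigO K f -> bnd g -> bigO K (fun t => f t * g t)%C.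
Proof. intros [B1 H1] [B2 H2]. exists (Rabs B1 * Rabs B2). intros t Ht.
  rewrite Cmod_mult. specialize (H1 t Ht). specialize (H2 t Ht).
  pose proof (pow_abs_le1 t K Ht). pose proof (Cmod_ge_0 (f t)). pose proof (Cmod_ge_0 (g t)).
  assert (Cmod (f t) <= Rabs B1 * Rabs t ^ K).
  { eapply Rle_trans; [apply H1|]. apply Rmult_le_compat_r. lra. apply Rle_abs. }
  assert (Cmod (g t) <= Rabs B2) by (eapply Rle_trans; [apply H2| apply Rle_abs]).
  pose proof (Rabs_pos B1). pose proof (Rabs_pos B2).
  assert (Cmod (f t) * Cmod (g t) <= (Rabs B1 * Rabs t ^ K) * Rabs B2).
  { apply Rmult_le_compat; auto. }
  nra. Qed.

Lemma bnd_mul_bigO K f g : bnd f -> bigO K g -> bigO K (fun t => f t * g t)%C.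
Proof. intros. eapply bigO_ext; [|apply bigO_mul_bnd; eauto]. intros; simpl. apply Cmult_comm. Qed.

Lemma bigO_t K f : bigO K f -> bigO (S K) (fun t => RtoC t * f t)%C.
Proof. intros [B H]. exists B. intros t Ht. rewrite Cmod_mult, Cmod_R. simpl.
  specialize (H t Ht). pose proof (Rabs_pos t).
  replace (B * (Rabs t * Rabs t ^ K)) with (Rabs t * (B * Rabs t ^ K)) by ring.
  apply Rmult_le_compat_l; auto. Qed.

Lemma bigO_weak K f : bigO (S K) f -> bigO K f.
Proof. intros [B H]. exists (Rabs B). intros t Ht. specialize (H t Ht). simpl in H.
  pose proof (pow_abs_le1 t K Ht). pose proof (Rabs_pos t).
  eapply Rle_trans; [apply H|].
  assert (B * (Rabs t * Rabs t ^ K) <= Rabs B * (Rabs t * Rabs t ^ K)).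
  { apply Rmult_le_compat_r. nra. apply Rle_abs. }
  pose proof (Rabs_pos B).
  assert (0 <= Rabs B * Rabs t ^ K * (1 - Rabs t)).
  { apply Rmult_le_pos. apply Rmult_le_pos; lra. lra. }
  nra. Qed.

Lemma bnd_of_bigO K f : bigO K f -> bnd f.
Proof. intros [B H]. exists (Rabs B). intros t Ht. specialize (H t Ht).
  pose proof (pow_abs_le1 t K Ht).
  assert (B * Rabs t ^ K <= Rabs B * Rabs t ^ K) by (apply Rmult_le_compat_r; [lra|apply Rle_abs]).
  pose proof (Rabs_pos B). nra. Qed.

Lemma bigO0_of_bnd f : bnd f -> bigO 0 f.
Proof. intros [B H]. exists B. intros t Ht. simpl. rewrite Rmult_1_r. auto. Qed.

Lemma bigO_zero K : bigO K (fun _ => 0%C).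
Proof. exists 0. intros. rewrite Cmod_0. lra. Qed.

Lemma bnd_const c : bnd (fun _ => c).
Proof. exists (Cmod c). intros; lra. Qed.

Lemma bnd_plus f g : bnd f -> bnd g -> bnd (fun t => f t + g t)%C.
Proof. intros. apply (bnd_of_bigO 0). apply bigO_plus; apply bigO0_of_bnd; auto. Qed.
Lemma bnd_minus f g : bnd f -> bnd g -> bnd (fun t => f t - g t)%C.
Proof. intros. apply (bnd_of_bigO 0). apply bigO_minus; apply bigO0_of_bnd; auto. Qed.
Lemma bnd_mult f g : bnd f -> bnd g -> bnd (fun t => f t * g t)%C.
Proof. intros. apply (bnd_of_bigO 0). apply bigO_mul_bnd; auto; apply bigO0_of_bnd; auto. Qed.

Lemma bigO_mono N c : bigO N (fun t => c * RtoC (t ^ N))%C.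
Proof. exists (Cmod c). intros t Ht. rewrite Cmod_mult, Cmod_RtoC_pow. lra. Qed.

Lemma bnd_ev N u : bnd (ev N u).
Proof. induction N.
  - exists 0. intros. unfold ev; simpl. rewrite Cmod_0. lra.
  - eapply bnd_ext. 2:{ apply bnd_plus. apply IHN. apply (bnd_of_bigO N). apply (bigO_mono N (u N)). }
    intros t. reflexivity. Qed.

Lemma ev_tail N u : bigO N (fun t => ev (S N) u t - ev N u t)%C.
Proof. eapply bigO_ext; [|apply (bigO_mono N (u N))]. intros t. unfold ev. simpl.
  apply injective_projections; simpl; ring. Qed.

Lemma ev_prod N : forall u v,
  bigO N (fun t => ev N u t * ev N v t - ev N (conv u v) t)%C.
Proof.
  induction N; intros u v.
  - eapply bigO_ext; [|apply (bigO_zero 0)]. intros t. unfold ev; simpl.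
    apply injective_projections; simpl; ring.
  - set (su := fun k => u (S k)). set (sv := fun k => v (S k)).
    assert (Hc : forall k, conv u v (S k) = (u 0%nat * sv k + conv su v k)%C).
    { intros k. unfold conv. rewrite csum_front. reflexivity. }
    assert (E : forall t, (ev (S N) u t * ev (S N) v t - ev (S N) (conv u v) t)%C =
       (RtoC t * ((ev N su t * (ev (S N) v t - ev N v t)) +
                  (ev N su t * ev N v t - ev N (conv su v) t)))%C).
    { intros t. rewrite (ev_front N u), (ev_front N (conv u v)).
      rewrite (ev_ext N (fun k => conv u v (S k)) (fun k => u 0%nat * sv k + conv su v k)%C)
        by (intros; apply Hc).
      rewrite ev_plus, ev_scal. rewrite (ev_front N v).
      fold su. fold sv. unfold conv at 1. simpl.
      apply injective_projections; simpl; ring. }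
    eapply bigO_ext. { intros t. symmetry. apply E. }
    apply bigO_t. apply bigO_plus.
    + apply bnd_mul_bigO. apply bnd_ev. apply ev_tail.
    + apply IHN.
Qed.

Lemma small_choice B eps : 0 < eps -> exists d, 0 < d /\ d <= 1 /\ forall s, 0 <= s <= d -> Rabs B * s <= eps.
Proof. intros He. exists (Rmin 1 (eps / (Rabs B + 1))). pose proof (Rabs_pos B).
  assert (0 < eps / (Rabs B + 1)) by (apply Rdiv_lt_0_compat; lra).
  split; [apply Rmin_pos; lra|]. split; [apply Rmin_l|].
  intros s Hs. assert (s <= eps / (Rabs B + 1)) by (eapply Rle_trans; [apply Hs| apply Rmin_r]).
  assert (HH: Rabs B * s <= (Rabs B + 1) * (eps / (Rabs B + 1))).
  { apply Rmult_le_compat; lra. }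
  replace ((Rabs B + 1) * (eps / (Rabs B + 1))) with eps in HH by (field; lra). lra. Qed.

Lemma lo_of_bigO K f : bigO (S K) f -> littleo K f.
Proof. intros [B H] eps He. destruct (small_choice B eps He) as [d [Hd [Hd1 Hs]]].
  exists d. split; auto. intros t Ht. specialize (H t ltac:(lra)). simpl in H.
  specialize (Hs (Rabs t) ltac:(lra)).
  pose proof (pow_abs_le1 t K ltac:(lra)).
  assert (B * (Rabs t * Rabs t ^ K) <= (Rabs B * Rabs t) * Rabs t ^ K).
  { rewrite <- Rmult_assoc. apply Rmult_le_compat_r. lra. apply Rmult_le_compat_r. lra. apply Rle_abs. }
  assert ((Rabs B * Rabs t) * Rabs t ^ K <= eps * Rabs t ^ K) by (apply Rmult_le_compat_r; lra).
  lra. Qed.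

Lemma lo_ext K f g : (forall t, f t = g t) -> littleo K f -> littleo K g.
Proof. intros E H eps He. destruct (H eps He) as [d [Hd H1]]. exists d; split; auto.
  intros; rewrite <- E; auto. Qed.

Lemma lo_plus K f g : littleo K f -> littleo K g -> littleo K (fun t => f t + g t)%C.
Proof. intros H1 H2 eps He. destruct (H1 (eps/2)) as [d1 [Hd1 K1]]; [lra|].
  destruct (H2 (eps/2)) as [d2 [Hd2 K2]]; [lra|].
  exists (Rmin d1 d2). split. apply Rmin_pos; auto. intros t Ht.
  assert (Rmin d1 d2 <= d1) by apply Rmin_l. assert (Rmin d1 d2 <= d2) by apply Rmin_r.
  eapply Rle_trans. apply Cmod_triangle.
  specialize (K1 t ltac:(lra)). specialize (K2 t ltac:(lra)). lra. Qed.

Lemma lo_opp K f : littleo K f -> littleo K (fun t => - f t)%C.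
Proof. intros H eps He. destruct (H eps He) as [d [Hd H1]]. exists d; split; auto.
  intros; rewrite Cmod_opp; auto. Qed.

Lemma lo_minus K f g : littleo K f -> littleo K g -> littleo K (fun t => f t - g t)%C.
Proof. intros. apply lo_plus; auto. apply lo_opp; auto. Qed.

Lemma lo_weak K f : littleo (S K) f -> littleo K f.
Proof. intros H eps He. destruct (H eps He) as [d [Hd H1]]. exists (Rmin d 1).
  split. apply Rmin_pos; lra. intros t Ht.
  assert (Rmin d 1 <= d) by apply Rmin_l. assert (Rmin d 1 <= 1) by apply Rmin_r.
  specialize (H1 t ltac:(lra)). simpl in H1. pose proof (pow_abs_le1 t K ltac:(lra)).
  assert (eps * (Rabs t * Rabs t ^ K) <= eps * Rabs t ^ K).
  { apply Rmult_le_compat_l. lra. pose proof (Rabs_pos t). nra. }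
  lra. Qed.

Lemma Cmod_small_zero x : (forall eps, 0 < eps -> Cmod x <= eps) -> x = 0%C.
Proof. intros H. apply Cmod_eq_0. pose proof (Cmod_ge_0 x).
  destruct (Req_dec (Cmod x) 0); auto. specialize (H (Cmod x / 2) ltac:(lra)). lra. Qed.

Lemma lo_lim K f x : littleo K f -> bigO 1 (fun t => f t - x)%C -> x = 0%C.
Proof. intros H [B HB]. apply Cmod_small_zero. intros eps He.
  destruct (H (eps/2) ltac:(lra)) as [d [Hd H1]].
  destruct (small_choice B (eps/2) ltac:(lra)) as [d' [Hd' [Hd1' Hs]]].
  set (t := Rmin (d/2) d').
  assert (Ht0 : 0 < t) by (apply Rmin_pos; lra).
  assert (Ht1 : t <= d/2) by apply Rmin_l. assert (Ht2 : t <= d') by apply Rmin_r.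
  assert (Ht3 : Rabs t = t) by (apply Rabs_right; lra).
  specialize (H1 t ltac:(lra)). specialize (HB t ltac:(lra)). specialize (Hs t ltac:(lra)).
  pose proof (pow_abs_le1 t K ltac:(lra)) as H6. simpl in HB. rewrite Rmult_1_r in HB.
  replace x with (f t - (f t - x))%C by (apply injective_projections; simpl; ring).
  eapply Rle_trans. apply Cmod_triangle. rewrite Cmod_opp.
  assert (eps / 2 * Rabs t ^ K <= eps/2) by (destruct H6; nra).
  assert (B * Rabs t <= Rabs B * t) by (rewrite Ht3; apply Rmult_le_compat_r; [lra|apply Rle_abs]).
  lra. Qed.

Lemma lo_div_t K g : littleo (S K) (fun t => RtoC t * g t)%C -> littleo K g.
Proof. intros H eps He. destruct (H eps He) as [d [Hd H1]]. exists d. split; auto.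
  intros t Ht. specialize (H1 t Ht). rewrite Cmod_mult, Cmod_R in H1. simpl in H1.
  apply Rmult_le_reg_l with (Rabs t). lra. lra. Qed.

Lemma lo_mul K f g : littleo K f -> bigO 1 g -> littleo (S K) (fun t => f t * g t)%C.
Proof. intros H [B HB] eps He.
  destruct (H (eps / (Rabs B + 1))) as [d [Hd H1]].
  { pose proof (Rabs_pos B). apply Rdiv_lt_0_compat; lra. }
  exists (Rmin d 1). split. apply Rmin_pos; lra. intros t Ht.
  assert (Rmin d 1 <= d) by apply Rmin_l. assert (Rmin d 1 <= 1) by apply Rmin_r.
  specialize (H1 t ltac:(lra)). specialize (HB t ltac:(lra)). simpl in HB. rewrite Rmult_1_r in HB.
  rewrite Cmod_mult. simpl. pose proof (Rabs_pos B). pose proof (Rabs_pos t).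
  pose proof (pow_abs_le1 t K ltac:(lra)).
  assert (Cmod (g t) <= Rabs B * Rabs t) by (eapply Rle_trans; [apply HB| apply Rmult_le_compat_r; [lra|apply Rle_abs]]).
  assert (Cmod (f t) * Cmod (g t) <= (eps / (Rabs B + 1) * Rabs t ^ K) * (Rabs B * Rabs t)).
  { apply Rmult_le_compat; auto; apply Cmod_ge_0. }
  assert (eps / (Rabs B + 1) * Rabs B <= eps).
  { unfold Rdiv. replace (eps * / (Rabs B + 1) * Rabs B) with (eps * (Rabs B / (Rabs B + 1))) by (field; lra).
    assert (Rabs B / (Rabs B + 1) <= 1). { apply Rmult_le_reg_r with (Rabs B + 1). lra.
      unfold Rdiv. rewrite Rmult_assoc, Rinv_l by lra. lra. }
    nra. }
  assert (0 <= Rabs t ^ K * Rabs t) by nra.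
  assert ((eps / (Rabs B + 1) * Rabs t ^ K) * (Rabs B * Rabs t) = (eps / (Rabs B + 1) * Rabs B) * (Rabs t ^ K * Rabs t)) by ring.
  nra. Qed.

Lemma lo_weak0 K f : littleo K f -> littleo 0 f.
Proof. induction K; auto. intros H. apply IHK. apply lo_weak. auto. Qed.

Lemma coef_zero K : forall N u, (K < N)%nat -> littleo K (ev N u) ->
  forall k, (k <= K)%nat -> u k = 0%C.
Proof.
  induction K; intros N u HN H k Hk; destruct N as [|N]; try lia.
  - assert (k = 0%nat) by lia. subst k. apply (lo_lim 0 (ev (S N) u)); auto.
    eapply bigO_ext. 2:{ apply bigO_t. apply (bigO0_of_bnd _ (bnd_ev N (fun k => u (S k)))). }
    intros t. rewrite ev_front. apply injective_projections; simpl; ring.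
  - assert (H0 : u 0%nat = 0%C).
    { apply (lo_lim 0 (ev (S N) u)). apply lo_weak0 with (S K); auto.
      eapply bigO_ext. 2:{ apply bigO_t. apply (bigO0_of_bnd _ (bnd_ev N (fun k => u (S k)))). }
      intros t. rewrite ev_front. apply injective_projections; simpl; ring. }
    destruct k as [|k]; auto.
    apply (IHK N (fun k => u (S k))); try lia.
    apply lo_div_t. eapply lo_ext; [|apply H]. intros t. rewrite ev_front, H0.
    apply injective_projections; simpl; ring.
Qed.


Lemma cx_toC g p : cx (toC g) p = (px g p, 0).
Proof. unfold cx, px, toC, RtoC; simpl. rewrite Derive_const. reflexivity. Qed.
Lemma cy_toC g p : cy (toC g) p = (py g p, 0).
Proof. unfold cy, py, toC, RtoC; simpl. rewrite Derive_const. reflexivity. Qed.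

Lemma Dw_toC g p : Dw (toC g) p = (/2 * px g p, -/2 * py g p).
Proof. unfold Dw. rewrite cx_toC, cy_toC. apply injective_projections; simpl; field. Qed.
Lemma Dwb_toC g p : Dwb (toC g) p = (/2 * px g p, /2 * py g p).
Proof. unfold Dwb. rewrite cx_toC, cy_toC. apply injective_projections; simpl; field. Qed.

Lemma cx_Dw g z : cx (Dw (toC g)) z = (/2 * px (px g) z, -/2 * px (py g) z).
Proof. unfold cx.
  rewrite (Derive_ext (fun s => fst (Dw (toC g) (s, snd z))) (fun s => /2 * px g (s, snd z)))
    by (intros; rewrite Dw_toC; reflexivity).
  rewrite (Derive_ext (fun s => snd (Dw (toC g) (s, snd z))) (fun s => -/2 * py g (s, snd z)))
    by (intros; rewrite Dw_toC; reflexivity).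
  rewrite !Derive_scal. reflexivity. Qed.
Lemma cy_Dw g z : cy (Dw (toC g)) z = (/2 * py (px g) z, -/2 * py (py g) z).
Proof. unfold cy.
  rewrite (Derive_ext (fun s => fst (Dw (toC g) (fst z, s))) (fun s => /2 * px g (fst z, s)))
    by (intros; rewrite Dw_toC; reflexivity).
  rewrite (Derive_ext (fun s => snd (Dw (toC g) (fst z, s))) (fun s => -/2 * py g (fst z, s)))
    by (intros; rewrite Dw_toC; reflexivity).
  rewrite !Derive_scal. reflexivity. Qed.
Lemma cx_Dwb g z : cx (Dwb (toC g)) z = (/2 * px (px g) z, /2 * px (py g) z).
Proof. unfold cx.
  rewrite (Derive_ext (fun s => fst (Dwb (toC g) (s, snd z))) (fun s => /2 * px g (s, snd z)))
    by (intros; rewrite Dwb_toC; reflexivity).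
  rewrite (Derive_ext (fun s => snd (Dwb (toC g) (s, snd z))) (fun s => /2 * py g (s, snd z)))
    by (intros; rewrite Dwb_toC; reflexivity).
  rewrite !Derive_scal. reflexivity. Qed.
Lemma cy_Dwb g z : cy (Dwb (toC g)) z = (/2 * py (px g) z, /2 * py (py g) z).
Proof. unfold cy.
  rewrite (Derive_ext (fun s => fst (Dwb (toC g) (fst z, s))) (fun s => /2 * px g (fst z, s)))
    by (intros; rewrite Dwb_toC; reflexivity).
  rewrite (Derive_ext (fun s => snd (Dwb (toC g) (fst z, s))) (fun s => /2 * py g (fst z, s)))
    by (intros; rewrite Dwb_toC; reflexivity).
  rewrite !Derive_scal. reflexivity. Qed.

Lemma f_ww_eq g z : f_ww g z =
  (/4 * (px (px g) z - py (py g) z), -/4 * (px (py g) z + py (px g) z)).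
Proof. unfold f_ww, Dw at 1. rewrite cx_Dw, cy_Dw. apply injective_projections; simpl; field. Qed.
Lemma f_wbwb_eq g z : f_wbwb g z =
  (/4 * (px (px g) z - py (py g) z), /4 * (px (py g) z + py (px g) z)).
Proof. unfold f_wbwb, Dwb at 1. rewrite cx_Dwb, cy_Dwb. apply injective_projections; simpl; field. Qed.
Lemma f_wwb_eq g z : f_wwb g z =
  (/4 * (px (px g) z + py (py g) z), /4 * (py (px g) z - px (py g) z)).
Proof. unfold f_wwb, Dwb at 1. rewrite cx_Dw, cy_Dw. apply injective_projections; simpl; field. Qed.

Lemma Derive_sum_w (h : nat -> R -> R) (w : nat -> R) n x :
  (forall m, (m <= n)%nat -> ex_derive (h m) x) ->
  ex_derive (fun s => sum_f_R0 (fun m => h m s * w m) n) x /\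
  Derive (fun s => sum_f_R0 (fun m => h m s * w m) n) x = sum_f_R0 (fun m => Derive (h m) x * w m) n.
Proof.
  induction n; intros H; simpl.
  - split. apply ex_derive_mult. apply H; lia. apply ex_derive_const.
    apply Derive_scal_l.
  - destruct IHn as [E1 E2]. intros; apply H; lia.
    assert (E3 : ex_derive (fun s => h (S n) s * w (S n)) x).
    { apply ex_derive_mult. apply H; lia. apply ex_derive_const. }
    split. apply (ex_derive_plus _ _ x E1 E3).
    rewrite Derive_plus; auto. rewrite E2, Derive_scal_l. reflexivity.
Qed.

Definition wt (t : R) (m : nat) : R := t ^ m / INR (fact m).

Lemma ftaylor_w fm n t z : ftaylor fm n t z = sum_f_R0 (fun m => fm m z * wt t m) n.
Proof. unfold ftaylor, wt. apply sum_eq. intros. unfold Rdiv. ring. Qed.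

Definition loc_open (U : C -> Prop) := forall z, U z -> exists r, 0 < r /\
  forall a b, Rabs (a - fst z) < r -> Rabs (b - snd z) < r -> U (a, b).

Definition ifact (k : nat) : C := RtoC (/ INR (fact k)).

Lemma sum_C (a : nat -> C) n : csum (S n) a = (sum_f_R0 (fun k => fst (a k)) n, sum_f_R0 (fun k => snd (a k)) n).
Proof. induction n. simpl. apply injective_projections; simpl; ring.
  change (csum (S (S n)) a) with (csum (S n) a + a (S n))%C. rewrite IHn. reflexivity. Qed.

Lemma sum_lin2 a b w c1 c2 n : sum_f_R0 (fun k => (c1 * a k + c2 * b k) * w k) n =
  c1 * sum_f_R0 (fun k => a k * w k) n + c2 * sum_f_R0 (fun k => b k * w k) n.
Proof. induction n; simpl. ring. rewrite IHn. ring. Qed.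

Lemma sum_comb c1 c2 a b w n f : (forall k, f k = (c1 * a k + c2 * b k) * w k) ->
  sum_f_R0 f n = c1 * sum_f_R0 (fun k => a k * w k) n + c2 * sum_f_R0 (fun k => b k * w k) n.
Proof. intros H. rewrite <- sum_lin2. apply sum_eq. intros; apply H. Qed.

Lemma ev_pair (p q : nat -> R) n t : ev (S n) (fun k => (p k, q k) * ifact k)%C t =
  (sum_f_R0 (fun k => p k * wt t k) n, sum_f_R0 (fun k => q k * wt t k) n).
Proof. unfold ev. rewrite sum_C. apply injective_projections; simpl; apply sum_eq; intros;
  unfold ifact, wt; simpl; field; apply INR_fact_neq_0. Qed.

Section Lin.
Variable U : C -> Prop.
Variable n : nat.
Variable fm : nat -> C -> R.
Variable t : R.
Hypothesis HU : loc_open U.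
Hypothesis HC : forall m, (m <= n)%nat -> C2_on U (fm m).

Lemma px_taylor p : U p -> px (ftaylor fm n t) p = sum_f_R0 (fun m => px (fm m) p * wt t m) n.
Proof. intros Hp. unfold px.
  rewrite (Derive_ext _ (fun s => sum_f_R0 (fun m => fm m (s, snd p) * wt t m) n))
    by (intros; apply ftaylor_w).
  apply Derive_sum_w. intros m Hm. destruct (HC m Hm) as [H1 _]. apply (H1 p Hp). Qed.

Lemma py_taylor p : U p -> py (ftaylor fm n t) p = sum_f_R0 (fun m => py (fm m) p * wt t m) n.
Proof. intros Hp. unfold py.
  rewrite (Derive_ext _ (fun s => sum_f_R0 (fun m => fm m (fst p, s) * wt t m) n))
    by (intros; apply ftaylor_w).
  apply Derive_sum_w. intros m Hm. destruct (HC m Hm) as [H1 _]. apply (H1 p Hp). Qed.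

Lemma outer_px (D : (C -> R) -> C -> R) z : U z ->
  (forall p, U p -> D (ftaylor fm n t) p = sum_f_R0 (fun m => D (fm m) p * wt t m) n) ->
  (forall m, (m <= n)%nat -> C1_on U (D (fm m))) ->
  px (D (ftaylor fm n t)) z = sum_f_R0 (fun m => px (D (fm m)) z * wt t m) n.
Proof. intros Hz HD HC1. unfold px at 1.
  rewrite (Derive_ext_loc _ (fun s => sum_f_R0 (fun m => D (fm m) (s, snd z) * wt t m) n)).
  - apply Derive_sum_w. intros m Hm. apply (HC1 m Hm z Hz).
  - destruct (HU z Hz) as [r [Hr Hr']]. exists (mkposreal r Hr). intros s Hs.
    apply HD. apply Hr'. apply Hs. rewrite Rminus_diag, Rabs_R0. auto.
Qed.

Lemma outer_py (D : (C -> R) -> C -> R) z : U z ->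
  (forall p, U p -> D (ftaylor fm n t) p = sum_f_R0 (fun m => D (fm m) p * wt t m) n) ->
  (forall m, (m <= n)%nat -> C1_on U (D (fm m))) ->
  py (D (ftaylor fm n t)) z = sum_f_R0 (fun m => py (D (fm m)) z * wt t m) n.
Proof. intros Hz HD HC1. unfold py at 1.
  rewrite (Derive_ext_loc _ (fun s => sum_f_R0 (fun m => D (fm m) (fst z, s) * wt t m) n)).
  - apply Derive_sum_w. intros m Hm. apply (HC1 m Hm z Hz).
  - destruct (HU z Hz) as [r [Hr Hr']]. exists (mkposreal r Hr). intros s Hs.
    apply HD. apply Hr'. rewrite Rminus_diag, Rabs_R0. auto. apply Hs.
Qed.

Lemma C1px m : (m <= n)%nat -> C1_on U (px (fm m)).
Proof. intros Hm; apply (HC m Hm). Qed.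
Lemma C1py m : (m <= n)%nat -> C1_on U (py (fm m)).
Proof. intros Hm; apply (HC m Hm). Qed.

Let g := ftaylor fm n t.
Lemma pxx_t z : U z -> px (px g) z = sum_f_R0 (fun m => px (px (fm m)) z * wt t m) n.
Proof. intros Hz. apply outer_px; auto. apply px_taylor. apply C1px. Qed.
Lemma pxy_t z : U z -> py (px g) z = sum_f_R0 (fun m => py (px (fm m)) z * wt t m) n.
Proof. intros Hz. apply outer_py; auto. apply px_taylor. apply C1px. Qed.
Lemma pyx_t z : U z -> px (py g) z = sum_f_R0 (fun m => px (py (fm m)) z * wt t m) n.
Proof. intros Hz. apply outer_px; auto. apply py_taylor. apply C1py. Qed.
Lemma pyy_t z : U z -> py (py g) z = sum_f_R0 (fun m => py (py (fm m)) z * wt t m) n.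
Proof. intros Hz. apply outer_py; auto. apply py_taylor. apply C1py. Qed.

Lemma ww_taylor z : U z -> f_ww g z = ev (S n) (fun k => f_ww (fm k) z * ifact k)%C t.
Proof. intros Hz. rewrite f_ww_eq, pxx_t, pxy_t, pyx_t, pyy_t by auto.
  rewrite (ev_ext _ _ (fun k => ((/4 * (px (px (fm k)) z - py (py (fm k)) z))%R,
     (-/4 * (px (py (fm k)) z + py (px (fm k)) z))%R) * ifact k)%C)
    by (intros; rewrite f_ww_eq; reflexivity).
  rewrite ev_pair. apply injective_projections; simpl.
  - match goal with |- _ = sum_f_R0 ?f _ => rewrite (sum_comb (/4) (-/4) (fun k => px (px (fm k)) z) (fun k => py (py (fm k)) z) (wt t) n f) by (intros; ring) end. ring.
  - match goal with |- _ = sum_f_R0 ?f _ => rewrite (sum_comb (-/4) (-/4) (fun k => px (py (fm k)) z) (fun k => py (px (fm k)) z) (wt t) n f) by (intros; ring) end. ring.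
Qed.

Lemma wbwb_taylor z : U z -> f_wbwb g z = ev (S n) (fun k => f_wbwb (fm k) z * ifact k)%C t.
Proof. intros Hz. rewrite f_wbwb_eq, pxx_t, pxy_t, pyx_t, pyy_t by auto.
  rewrite (ev_ext _ _ (fun k => ((/4 * (px (px (fm k)) z - py (py (fm k)) z))%R,
     (/4 * (px (py (fm k)) z + py (px (fm k)) z))%R) * ifact k)%C)
    by (intros; rewrite f_wbwb_eq; reflexivity).
  rewrite ev_pair. apply injective_projections; simpl.
  - match goal with |- _ = sum_f_R0 ?f _ => rewrite (sum_comb (/4) (-/4) (fun k => px (px (fm k)) z) (fun k => py (py (fm k)) z) (wt t) n f) by (intros; ring) end. ring.
  - match goal with |- _ = sum_f_R0 ?f _ => rewrite (sum_comb (/4) (/4) (fun k => px (py (fm k)) z) (fun k => py (px (fm k)) z) (wt t) n f) by (intros; ring) end. ring.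
Qed.

Lemma wwb_taylor z : U z -> f_wwb g z = ev (S n) (fun k => f_wwb (fm k) z * ifact k)%C t.
Proof. intros Hz. rewrite f_wwb_eq, pxx_t, pxy_t, pyx_t, pyy_t by auto.
  rewrite (ev_ext _ _ (fun k => ((/4 * (px (px (fm k)) z + py (py (fm k)) z))%R,
     (/4 * (py (px (fm k)) z - px (py (fm k)) z))%R) * ifact k)%C)
    by (intros; rewrite f_wwb_eq; reflexivity).
  rewrite ev_pair. apply injective_projections; simpl.
  - match goal with |- _ = sum_f_R0 ?f _ => rewrite (sum_comb (/4) (/4) (fun k => px (px (fm k)) z) (fun k => py (py (fm k)) z) (wt t) n f) by (intros; ring) end. ring.
  - match goal with |- _ = sum_f_R0 ?f _ => rewrite (sum_comb (/4) (-/4) (fun k => py (px (fm k)) z) (fun k => px (py (fm k)) z) (wt t) n f) by (intros; ring) end. ring.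
Qed.

End Lin.


Lemma cont_pair (f g : R -> R) s : continuous f s -> continuous g s -> @continuous R_UniformSpace C_UniformSpace (fun x => (f x, g x)) s.
Proof.
intros Hf Hg.
apply (continuous_comp_2 f g (fun a b => (a, b))); auto.
assert (H: continuous (fun y : prod_UniformSpace R_UniformSpace R_UniformSpace => y) (f s, g s)) by apply continuous_id.
unfold continuous in *. simpl. eapply filterlim_ext; [|exact H]. intros [a b]; reflexivity.
Qed.
Lemma cont_fst (h : R -> C) s : continuous h s -> continuous (fun x => fst (h x)) s.
Proof. intros H. apply continuous_comp; auto.
 destruct (h s) as [a b]. apply continuous_fst. Qed.
Lemma cont_snd (h : R -> C) s : continuous h s -> continuous (fun x => snd (h x)) s.
Proof. intros H. apply continuous_comp; auto.
 destruct (h s) as [a b]. apply continuous_snd. Qed.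

Definition mu (s : R) := (2*s - 1 + Rabs (2*s-1))/2.
Definition ka (s : R) := (1 - 2*s + Rabs (1-2*s))/2.
Lemma mu_lo s : s <= 1/2 -> mu s = 0.
Proof. intros. unfold mu. rewrite Rabs_left1 by lra. lra. Qed.
Lemma mu_hi s : 1/2 <= s -> mu s = 2*s-1.
Proof. intros. unfold mu. rewrite Rabs_right by lra. lra. Qed.
Lemma ka_lo s : s <= 1/2 -> ka s = 1-2*s.
Proof. intros. unfold ka. rewrite Rabs_right by lra. lra. Qed.
Lemma ka_hi s : 1/2 <= s -> ka s = 0.
Proof. intros. unfold ka. rewrite Rabs_left1 by lra. lra. Qed.

Lemma cpt_cont (f : R -> R) s : continuity_pt f s -> continuous f s.
Proof. intros H. apply (proj1 (continuity_pt_filterlim f s)). auto. Qed.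
Lemma cont_cpt (f : R -> R) s : continuous f s -> continuity_pt f s.
Proof. intros H. apply (proj2 (continuity_pt_filterlim f s)). auto. Qed.

Lemma jordan_open U : jordan_domain U -> loc_open U.
Proof.
  intros [gamma [[Hc [H01 Hinj]] HU]] [x y] Hz.
  apply HU in Hz. destruct Hz as [Hnot [M HM]]. simpl.
  set (d2 := fun s => (fst (gamma s) - x) * (fst (gamma s) - x) + (snd (gamma s) - y) * (snd (gamma s) - y)).
  assert (Hd2c : forall c, continuity_pt d2 c).
  { intros c. assert (H1 : continuity_pt (fun s => fst (gamma s)) c) by (apply cont_cpt; apply cont_fst; apply Hc).
    assert (H2 : continuity_pt (fun s => snd (gamma s)) c) by (apply cont_cpt; apply cont_snd; apply Hc).
    assert (H3 : continuity_pt (fun _ : R => x) c) by reg.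
    assert (H4 : continuity_pt (fun _ : R => y) c) by reg.
    unfold d2. apply continuity_pt_plus; apply continuity_pt_mult; apply continuity_pt_minus; auto. }
  destruct (continuity_ab_min d2 0 1 ltac:(lra) (fun c _ => Hd2c c)) as [mx [Hmin Hmx]].
  set (r0 := d2 mx).
  assert (close_avoid : forall w, (fst w - x) * (fst w - x) + (snd w - y) * (snd w - y) < r0 -> ~ on_curve gamma w).
  { intros w Hw [s [Hs Heq]]. specialize (Hmin s Hs). fold r0 in Hmin. unfold d2 in Hmin.
    rewrite Heq in Hmin. exact (Rlt_irrefl _ (Rle_lt_trans _ _ _ Hmin Hw)). }
  assert (Hr0 : 0 < r0).
  { destruct (Rlt_le_dec 0 r0) as [h|h]; auto. exfalso. apply Hnot. exists mx. split; auto.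
    unfold r0, d2 in h.
    set (A := fst (gamma mx) - x) in h. set (B := snd (gamma mx) - y) in h.
    pose proof (Rle_0_sqr A). pose proof (Rle_0_sqr B). unfold Rsqr in *.
    assert (HA : A * A = 0) by lra. assert (HB : B * B = 0) by lra.
    apply Rmult_integral in HA. apply Rmult_integral in HB.
    assert (fst (gamma mx) - x = 0) by (destruct HA; auto).
    assert (snd (gamma mx) - y = 0) by (destruct HB; auto).
    apply injective_projections; simpl; lra. }
  exists (sqrt r0 / 2). split. { apply Rdiv_lt_0_compat. apply sqrt_lt_R0; auto. lra. }
  intros a b Ha Hb. apply HU.
  assert (Hsr : sqrt r0 * sqrt r0 = r0) by (apply sqrt_sqrt; lra).
  assert (Hsq : (a - x) * (a - x) + (b - y) * (b - y) < r0).
  {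
    assert ((a - x) * (a - x) = Rabs (a - x) * Rabs (a - x)) by (rewrite <- Rabs_mult; rewrite Rabs_right; [ring| apply Rle_ge, Rle_0_sqr]).
    assert ((b - y) * (b - y) = Rabs (b - y) * Rabs (b - y)) by (rewrite <- Rabs_mult; rewrite Rabs_right; [ring| apply Rle_ge, Rle_0_sqr]).
    pose proof (Rabs_pos (a - x)). pose proof (Rabs_pos (b - y)). pose proof (sqrt_pos r0). nra. }
  split.
  - apply close_avoid. simpl. lra.
  - exists M. intros z' [p [Hpc [Hp0 [Hp1 Hpav]]]]. apply HM.
    exists (fun s => (fst (p (mu s)) + ka s * (x - a), snd (p (mu s)) + ka s * (y - b))).
    split; [|split; [|split]].
    + intros s. apply cont_pair.
      * apply cpt_cont. apply continuity_pt_plus.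
        -- apply cont_cpt. apply (cont_fst (fun s => p (mu s))). apply continuous_comp.
           apply cpt_cont. unfold mu. reg. apply Hpc.
        -- unfold ka. reg.
      * apply cpt_cont. apply continuity_pt_plus.
        -- apply cont_cpt. apply (cont_snd (fun s => p (mu s))). apply continuous_comp.
           apply cpt_cont. unfold mu. reg. apply Hpc.
        -- unfold ka. reg.
    + rewrite mu_lo, ka_lo by lra. rewrite Hp0. simpl. apply injective_projections; simpl; ring.
    + rewrite mu_hi, ka_hi by lra. replace (2*1-1) with 1 by ring. rewrite Hp1.
      apply injective_projections; simpl; ring.
    + intros s Hs. destruct (Rle_dec s (1/2)) as [h|h].
      * rewrite mu_lo, ka_lo by lra. rewrite Hp0. apply close_avoid. simpl.
        assert (0 <= 2*s <= 1) by lra.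
        replace (a + (1 - 2 * s) * (x - a) - x) with (2*s * (a - x)) by ring.
        replace (b + (1 - 2 * s) * (y - b) - y) with (2*s * (b - y)) by ring.
        assert (2*s*(a-x) * (2*s*(a-x)) <= (a-x)*(a-x)).
        { replace (2*s*(a-x) * (2*s*(a-x))) with ((2*s)*(2*s)*((a-x)*(a-x))) by ring.
          assert (0 <= (a-x)*(a-x)) by apply Rle_0_sqr. assert ((2*s)*(2*s) <= 1) by nra.
          apply Rle_trans with (1 * ((a-x)*(a-x))); [apply Rmult_le_compat_r; lra | lra]. }
        assert (2*s*(b-y) * (2*s*(b-y)) <= (b-y)*(b-y)).
        { replace (2*s*(b-y) * (2*s*(b-y))) with ((2*s)*(2*s)*((b-y)*(b-y))) by ring.
          assert (0 <= (b-y)*(b-y)) by apply Rle_0_sqr. assert ((2*s)*(2*s) <= 1) by nra.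
          apply Rle_trans with (1 * ((b-y)*(b-y))); [apply Rmult_le_compat_r; lra | lra]. }
        lra.
      * rewrite mu_hi, ka_hi by lra.
        replace (fst (p (2 * s - 1)) + 0 * (x - a), snd (p (2 * s - 1)) + 0 * (y - b)) with (p (2*s-1)).
        apply Hpav. lra.
        apply injective_projections; simpl; ring.
Qed.


Lemma ifact0 : ifact 0 = RtoC 1.
Proof. unfold ifact. simpl. rewrite Rinv_1. reflexivity. Qed.
Lemma ifact1 : ifact 1 = RtoC 1.
Proof. unfold ifact. simpl. replace (1 * 1) with 1 by ring. rewrite Rinv_1. reflexivity. Qed.

Lemma RtoC_neq0 x : x <> 0 -> RtoC x <> 0%C.
Proof. intros H E. apply H. apply (f_equal fst) in E. simpl in E. auto. Qed.

Lemma C_real w : Im w = 0 -> w = RtoC (Re w).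
Proof. destruct w as [u v]. simpl. intros ->. reflexivity. Qed.

Lemma sqrt_lip q p : 0 <= q -> 0 < p -> Rabs (sqrt q - sqrt p) <= Rabs (q - p) / sqrt p.
Proof. intros Hq Hp. pose proof (sqrt_lt_R0 p Hp). pose proof (sqrt_pos q).
  assert (E : q - p = (sqrt q - sqrt p) * (sqrt q + sqrt p)).
  { rewrite Rmult_comm. replace ((sqrt q + sqrt p) * (sqrt q - sqrt p)) with (sqrt q * sqrt q - sqrt p * sqrt p) by ring.
    rewrite !sqrt_sqrt; lra. }
  rewrite E, Rabs_mult. rewrite (Rabs_right (sqrt q + sqrt p)) by lra.
  unfold Rdiv. rewrite Rmult_assoc.
  pose proof (Rabs_pos (sqrt q - sqrt p)).
  assert ((sqrt q + sqrt p) * / sqrt p >= 1).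
  { apply Rle_ge. apply Rmult_le_reg_r with (sqrt p). auto.
    rewrite Rmult_assoc, Rinv_l by lra. lra. }
  nra. Qed.

Lemma Cmult_eq0_l (d x : C) : d <> 0%C -> (d * x = 0)%C -> x = 0%C.
Proof. intros Hd H. replace x with (/ d * (d * x))%C by (field; auto). rewrite H. ring. Qed.

Lemma bigO_RtoC_t (g : R -> C) : bnd g -> bigO 1 (fun t => RtoC t * g t)%C.
Proof. intros. apply bigO_t. apply bigO0_of_bnd. auto. Qed.

Lemma lo_from_prod K (f E : R -> C) s : 0 < s ->
  (exists d0, 0 < d0 /\ forall t, Rabs t < d0 -> s <= Cmod (E t)) ->
  bigO (S (S K)) (fun t => f t * (RtoC t * E t))%C -> littleo K f.
Proof.
  intros Hs [d0 [Hd0 HE]] [C HC] eps He.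
  destruct (small_choice (C / s) eps He) as [d [Hd [Hd1 Hsm]]].
  exists (Rmin d d0). split. apply Rmin_pos; auto. intros t Ht.
  assert (Rmin d d0 <= d) by apply Rmin_l. assert (Rmin d d0 <= d0) by apply Rmin_r.
  specialize (HE t ltac:(lra)). specialize (HC t ltac:(lra)). specialize (Hsm (Rabs t) ltac:(lra)).
  rewrite !Cmod_mult, Cmod_R in HC. simpl in HC.
  pose proof (Cmod_ge_0 (f t)). pose proof (pow_abs_le1 t K ltac:(lra)) as [Hp0 Hp1].
  assert (K1 : Cmod (f t) * (Rabs t * s) <= C * (Rabs t * (Rabs t * Rabs t ^ K))).
  { eapply Rle_trans; [|apply HC]. apply Rmult_le_compat_l; auto.
    apply Rmult_le_compat_l. apply Rabs_pos. auto. }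
  assert (K2 : Cmod (f t) * s <= C * (Rabs t * Rabs t ^ K)).
  { apply Rmult_le_reg_l with (Rabs t). lra.
    replace (Rabs t * (Cmod (f t) * s)) with (Cmod (f t) * (Rabs t * s)) by ring.
    replace (Rabs t * (C * (Rabs t * Rabs t ^ K))) with (C * (Rabs t * (Rabs t * Rabs t ^ K))) by ring. auto. }
  assert (K3 : Cmod (f t) <= (C / s) * Rabs t * Rabs t ^ K).
  { apply Rmult_le_reg_r with s. auto. unfold Rdiv.
    replace (C * / s * Rabs t * Rabs t ^ K * s) with (C * (Rabs t * Rabs t ^ K)) by (field; lra). auto. }
  assert ((C / s) * Rabs t <= Rabs (C / s) * Rabs t) by (apply Rmult_le_compat_r; [apply Rabs_pos| apply Rle_abs]).
  assert ((C / s) * Rabs t * Rabs t ^ K <= eps * Rabs t ^ K) by (apply Rmult_le_compat_r; lra).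
  lra.
Qed.

Section Core.
Variable n : nat.
Variables a b c : nat -> C.
Variables A B F : R -> C.
Hypothesis HF : forall t, F t = ev (S n) (fun k => c k * ifact k)%C t.
Hypothesis HA : forall t, A t = ev (S n) (fun k => a k * ifact k)%C t.
Hypothesis HB : forall t, B t = ev (S n) (fun k => b k * ifact k)%C t.
Hypothesis HAB : forall t, Im (A t * B t) = 0 /\ 0 <= Re (A t * B t).
Hypothesis H0 : Im (a 0%nat * b 0%nat) = 0 /\ 0 < Re (a 0%nat * b 0%nat).

Definition phi k := if (k <=? n)%nat then (c k * ifact k)%C else 0%C.
Definition al k := (a k * ifact k)%C.
Definition be k := (b k * ifact k)%C.
Definition Q t := Re (A t * B t).
Definition P0 := Re (a 0%nat * b 0%nat).
Definition G t := RtoC (t * sqrt (Q t)).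
Definition hh k := (conv phi phi k - shift1 (shift1 (conv al be)) k)%C.
Definition HH t := (F t * F t - RtoC t * RtoC t * (A t * B t))%C.
Definition sphi k := phi (S k).

Lemma F_phi t : F t = ev (S n) phi t.
Proof. rewrite HF. apply ev_ext. intros k Hk. unfold phi.
  rewrite (proj2 (Nat.leb_le k n)) by lia. reflexivity. Qed.

Lemma F_phi2 t : F t = ev (S (S n)) phi t.
Proof. rewrite F_phi. unfold ev. change (csum (S (S n)) (fun k => phi k * RtoC (t ^ k))%C)
  with (csum (S n) (fun k => phi k * RtoC (t ^ k)) + phi (S n) * RtoC (t ^ (S n)))%C.
  assert (E : phi (S n) = 0%C) by (unfold phi; rewrite (proj2 (Nat.leb_gt (S n) n)) by lia; reflexivity).
  rewrite E. apply injective_projections; simpl; ring. Qed.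

Lemma phi0 : phi 0%nat = c 0%nat.
Proof. unfold phi. simpl. rewrite ifact0. ring. Qed.

Lemma AB_real t : (A t * B t)%C = RtoC (Q t).
Proof. apply C_real. apply HAB. Qed.
Lemma ab0_real : (a 0%nat * b 0%nat)%C = RtoC P0.
Proof. apply C_real. apply H0. Qed.
Lemma Q_nonneg t : 0 <= Q t.
Proof. apply HAB. Qed.
Lemma P0_pos : 0 < P0.
Proof. apply H0. Qed.
Lemma sP0 : 0 < sqrt P0.
Proof. apply sqrt_lt_R0. apply P0_pos. Qed.

Lemma A_lim : bigO 1 (fun t => A t - a 0%nat)%C.
Proof. eapply bigO_ext; [|apply (bigO_RtoC_t _ (bnd_ev n (fun k => al (S k))))].
  intros t. rewrite HA. change (fun k => a k * ifact k)%C with al. rewrite ev_front.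
  replace (al 0%nat) with (a 0%nat) by (unfold al; rewrite ifact0; ring). ring. Qed.
Lemma B_lim : bigO 1 (fun t => B t - b 0%nat)%C.
Proof. eapply bigO_ext; [|apply (bigO_RtoC_t _ (bnd_ev n (fun k => be (S k))))].
  intros t. rewrite HB. change (fun k => b k * ifact k)%C with be. rewrite ev_front.
  replace (be 0%nat) with (b 0%nat) by (unfold be; rewrite ifact0; ring). ring. Qed.
Lemma bnd_B : bnd B.
Proof. eapply bnd_ext; [|apply (bnd_ev (S n) be)]. intros t. rewrite HB. reflexivity. Qed.
Lemma bnd_A : bnd A.
Proof. eapply bnd_ext; [|apply (bnd_ev (S n) al)]. intros t. rewrite HA. reflexivity. Qed.

Lemma AB_lim : bigO 1 (fun t => A t * B t - a 0%nat * b 0%nat)%C.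
Proof. eapply bigO_ext. 2:{ apply bigO_plus. apply bigO_mul_bnd. apply A_lim. apply bnd_B.
    apply bnd_mul_bigO. apply (bnd_const (a 0%nat)). apply B_lim. }
  intros t. simpl. ring. Qed.

Lemma sqrtQ_lim : bigO 1 (fun t => RtoC (sqrt (Q t)) - RtoC (sqrt P0))%C.
Proof. destruct AB_lim as [C0 HC0]. exists (C0 / sqrt P0). intros t Ht.
  pose proof sP0. specialize (HC0 t Ht). simpl in HC0 |- *. rewrite Rmult_1_r in HC0 |- *.
  rewrite <- RtoC_minus, Cmod_R. eapply Rle_trans. apply sqrt_lip. apply Q_nonneg. apply P0_pos.
  assert (E : Rabs (Q t - P0) <= C0 * Rabs t).
  { eapply Rle_trans; [|apply HC0]. unfold Q, P0.
    eapply Rle_trans; [|apply re_le_Cmod]. right. f_equal. all: try (simpl; ring). }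
  unfold Rdiv. replace (C0 * / sqrt P0 * Rabs t) with ((C0 * Rabs t) * / sqrt P0) by ring.
  apply Rmult_le_compat_r. left; apply Rinv_0_lt_compat; auto. auto.
Qed.

Lemma sqrtQ_bnd : bnd (fun t => RtoC (sqrt (Q t))).
Proof. eapply bnd_ext. 2:{ apply bnd_plus. apply (bnd_of_bigO 1). apply sqrtQ_lim. apply (bnd_const (RtoC (sqrt P0))). }
  intros t. simpl. ring. Qed.

Lemma G_t t : G t = (RtoC t * RtoC (sqrt (Q t)))%C.
Proof. unfold G. apply RtoC_mult. Qed.

Lemma G_bigO : bigO 1 G.
Proof. eapply bigO_ext; [|apply (bigO_RtoC_t _ sqrtQ_bnd)]. intros t. rewrite G_t. reflexivity. Qed.

Lemma HH_id t : ((F t - G t) * (F t + G t))%C = HH t.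
Proof. unfold HH. rewrite G_t, AB_real.
  assert (E : (RtoC (sqrt (Q t)) * RtoC (sqrt (Q t)))%C = RtoC (Q t)).
  { rewrite <- RtoC_mult, sqrt_sqrt; auto. apply Q_nonneg. }
  transitivity (F t * F t - RtoC t * RtoC t * (RtoC (sqrt (Q t)) * RtoC (sqrt (Q t))))%C.
  ring. rewrite E. reflexivity. Qed.

Lemma B_tail : bigO n (fun t => B t - ev n be t)%C.
Proof. eapply bigO_ext; [|apply (ev_tail n be)]. intros t. rewrite HB. reflexivity. Qed.

Lemma HH_exp : bigO (S (S n)) (fun t => HH t - ev (S (S n)) hh t)%C.
Proof.
  apply (bigO_ext _ (fun t => (ev (S (S n)) phi t * ev (S (S n)) phi t - ev (S (S n)) (conv phi phi) t)
     - RtoC t * (RtoC t * ((ev (S n) al t - ev n al t) * B t + ev n al t * (B t - ev n be t)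
        + (ev n al t * ev n be t - ev n (conv al be) t))))%C).
  - intros t. unfold HH, hh.
    rewrite (ev_minus (S (S n)) (conv phi phi) (shift1 (shift1 (conv al be)))).
    rewrite (ev_shift1 (S n) (shift1 (conv al be))), (ev_shift1 n (conv al be)).
    rewrite <- F_phi2. rewrite (HA t). change (fun k => a k * ifact k)%C with al. ring.
  - apply bigO_minus. apply ev_prod.
    apply bigO_t. apply bigO_t. apply bigO_plus. apply bigO_plus.
    + apply bigO_mul_bnd. apply (ev_tail n al). apply bnd_B.
    + apply bnd_mul_bigO. apply bnd_ev. apply B_tail.
    + apply ev_prod.
Qed.

Lemma FG_front t : phi 0%nat = 0%C ->
  (F t - G t)%C = (RtoC t * (ev n sphi t - RtoC (sqrt (Q t))))%C.
Proof. intros Hp. rewrite F_phi, ev_front, G_t, Hp. fold sphi. ring. Qed.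
Lemma FpG_front t : phi 0%nat = 0%C ->
  (F t + G t)%C = (RtoC t * (ev n sphi t + RtoC (sqrt (Q t))))%C.
Proof. intros Hp. rewrite F_phi, ev_front, G_t, Hp. fold sphi. ring. Qed.

Lemma sphi_lim : bigO 1 (fun t => ev n sphi t - sphi 0%nat)%C \/ n = 0%nat.
Proof. destruct n as [|n']. right; auto. left.
  eapply bigO_ext; [|apply (bigO_RtoC_t _ (bnd_ev n' (fun k => sphi (S k))))].
  intros t. rewrite ev_front. ring. Qed.

Lemma dir1 : littleo n (fun t => F t - G t)%C ->
  c 0%nat = 0%C /\ ((1 <= n)%nat -> c 1%nat = RtoC (sqrt P0)) /\ (forall k, (k <= S n)%nat -> hh k = 0%C).
Proof.
  intros HL.
  assert (Hp0 : phi 0%nat = 0%C).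
  { apply (lo_lim n (fun t => F t - G t)%C); auto.
    eapply bigO_ext. 2:{ apply bigO_minus. apply (bigO_RtoC_t _ (bnd_ev n sphi)). apply G_bigO. }
    intros t. rewrite F_phi, ev_front. fold sphi. ring. }
  split; [rewrite <- phi0; auto|]. split.
  - intros Hn. set (n' := pred n). assert (En : n = S n') by (unfold n'; lia).
    assert (HX : littleo n' (fun t => ev n sphi t - RtoC (sqrt (Q t)))%C).
    { apply lo_div_t. pose proof HL as HL'. rewrite En in HL'. apply (lo_ext _ (fun t => F t - G t)%C); [intros t; apply FG_front; auto | apply HL']. }
    assert (Hl : (sphi 0%nat - RtoC (sqrt P0))%C = 0%C).
    { apply (lo_lim n' _ _ HX).
      eapply bigO_ext. 2:{ apply bigO_minus. apply (bigO_RtoC_t _ (bnd_ev n' (fun k => sphi (S k)))).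
        apply sqrtQ_lim. }
      intros t. rewrite En at 1. rewrite ev_front. ring. }
    assert (Hp1 : phi 1%nat = c 1%nat) by (unfold phi; rewrite (proj2 (Nat.leb_le 1 n)) by lia; rewrite ifact1; ring).
    unfold sphi in Hl. rewrite Hp1 in Hl.
    replace (c 1%nat) with ((c 1%nat - RtoC (sqrt P0)) + RtoC (sqrt P0))%C by ring.
    rewrite Hl. ring.
  - assert (HLH : littleo (S n) HH).
    { eapply lo_ext. { intros t. apply HH_id. }
      apply lo_mul. auto.
      eapply bigO_ext. { intros t. symmetry. apply FpG_front; auto. }
      apply bigO_RtoC_t. apply bnd_plus. apply bnd_ev. apply sqrtQ_bnd. }
    assert (Hh : littleo (S n) (ev (S (S n)) hh)).
    { eapply lo_ext. 2:{ apply lo_minus. apply HLH. apply lo_of_bigO. apply HH_exp. }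
      intros t. simpl. ring. }
    intros k Hk. apply (coef_zero (S n) (S (S n)) hh); auto.
Qed.

Lemma dir2 : c 0%nat = 0%C ->
  ((1 <= n)%nat -> c 1%nat = RtoC (sqrt P0) /\ (forall k, (3 <= k <= S n)%nat -> hh k = 0%C)) ->
  littleo n (fun t => F t - G t)%C.
Proof.
  intros Hc0 Hcase. assert (Hp0 : phi 0%nat = 0%C) by (rewrite phi0; auto).
  destruct (Nat.eq_dec n 0) as [Hn|Hn].
  - rewrite Hn. apply lo_of_bigO.
    eapply bigO_ext. { intros t. symmetry. apply FG_front; auto. }
    apply bigO_RtoC_t. apply bnd_minus. apply bnd_ev. apply sqrtQ_bnd.
  - destruct (Hcase ltac:(lia)) as [Hc1 Hhk].
    assert (Hp1 : phi 1%nat = RtoC (sqrt P0)).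
    { unfold phi. rewrite (proj2 (Nat.leb_le 1 n)) by lia. rewrite ifact1, Hc1. ring. }
    assert (Hh : forall k, (k < S (S n))%nat -> hh k = 0%C).
    { intros k Hk. destruct k as [|[|[|k]]].
      - change (hh 0%nat) with ((RtoC 0 + phi 0%nat * phi 0%nat) - 0)%C. rewrite Hp0. ring.
      - change (hh 1%nat) with (((RtoC 0 + phi 0%nat * phi 1%nat) + phi 1%nat * phi 0%nat) - 0)%C.
        rewrite Hp0. ring.
      - change (hh 2%nat) with ((((RtoC 0 + phi 0%nat * phi 2%nat) + phi 1%nat * phi 1%nat) + phi 2%nat * phi 0%nat)
           - (RtoC 0 + al 0%nat * be 0%nat))%C.
        rewrite Hp0, Hp1. unfold al, be. rewrite ifact0.
        replace (a 0%nat * RtoC 1 * (b 0%nat * RtoC 1))%C with (a 0%nat * b 0%nat)%C by ring.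
        rewrite ab0_real. rewrite <- RtoC_mult, sqrt_sqrt by (left; apply P0_pos). ring.
      - apply Hhk. lia. }
    assert (HHb : bigO (S (S n)) HH).
    { eapply bigO_ext; [|apply HH_exp]. intros t. simpl. rewrite (ev_zero _ hh t Hh). ring. }
    set (Y := fun t => (ev n sphi t + RtoC (sqrt (Q t)))%C).
    apply (lo_from_prod n _ Y (sqrt P0) sP0).
    + assert (HY : bigO 1 (fun t => Y t - RtoC (2 * sqrt P0))%C).
      { destruct sphi_lim as [Hs|Hs]; [|lia].
        eapply bigO_ext. 2:{ apply bigO_plus. apply Hs. apply sqrtQ_lim. }
        intros t. unfold Y. unfold sphi at 2. rewrite Hp1. rewrite RtoC_mult. ring. }
      destruct HY as [Bc HBc]. destruct (small_choice Bc (sqrt P0) sP0) as [d [Hd [Hd1 Hsm]]].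
      exists d. split; auto. intros t Ht.
      specialize (HBc t ltac:(lra)). specialize (Hsm (Rabs t) ltac:(split; [apply Rabs_pos|lra])).
      simpl in HBc. rewrite Rmult_1_r in HBc.
      assert (E : Cmod (RtoC (2 * sqrt P0)) <= Cmod (Y t) + Cmod (Y t - RtoC (2 * sqrt P0))).
      { rewrite <- (Cmod_opp (Y t - _)).
        replace (RtoC (2 * sqrt P0)) with (Y t + - (Y t - RtoC (2 * sqrt P0)))%C at 1 by ring.
        apply Cmod_triangle. }
      rewrite Cmod_R, Rabs_right in E by (pose proof sP0; lra).
      assert (Bc * Rabs t <= Rabs Bc * Rabs t) by (apply Rmult_le_compat_r; [apply Rabs_pos|apply Rle_abs]).
      lra.
    + eapply bigO_ext; [|apply HHb]. intros t. rewrite <- HH_id.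
      rewrite (FpG_front t Hp0). reflexivity.
Qed.

Definition FORM m := c m =
  ((RtoC (INR m) * csum_range 0 m
       (fun r => RtoC (binom (m - 1) r) * a r * b (m - r - 1)%nat)
    - RtoC (/ INR (m + 1)) * csum_range 2 m
       (fun r => RtoC (binom (m + 1) r) * c r * c (m - r + 1)%nat))
   / RtoC (2 ^ (1 - kdelta m 1)%nat * sqrt (Re (a 0%nat * b 0%nat))))%C.

Lemma form0 : FORM 0 <-> c 0%nat = 0%C.
Proof. unfold FORM. match goal with |- _ = ?R <-> _ => assert (E : R = 0%C) end.
  { unfold csum_range. simpl. unfold Cdiv. ring. }
  rewrite E. tauto. Qed.

Lemma form1 : FORM 1 <-> c 1%nat = RtoC (sqrt P0).
Proof. unfold FORM. match goal with |- _ = ?R <-> _ => assert (E : R = RtoC (sqrt P0)) end.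
  { unfold csum_range. simpl.
    change (fst (a 0%nat) * fst (b 0%nat) - snd (a 0%nat) * snd (b 0%nat)) with P0.
    assert (Hb : binom 0 0 = 1) by (unfold binom, Binomial.C; simpl; field).
    match goal with |- (?X / _)%C = _ => replace X with (a 0%nat * b 0%nat)%C by (rewrite Hb; ring) end.
    rewrite ab0_real, Rmult_1_l. pose proof sP0. rewrite <- RtoC_div by lra. f_equal.
    pattern P0 at 1. rewrite <- (sqrt_sqrt P0) by (left; apply P0_pos). field. lra. }
  rewrite E. tauto. Qed.

Definition S1 m := csum_range 0 m (fun r => RtoC (binom (m - 1) r) * a r * b (m - r - 1)%nat)%C.
Definition S2 m := csum_range 2 m (fun r => RtoC (binom (m + 1) r) * c r * c (m - r + 1)%nat)%C.

Lemma coef_eq (Fc i1 i2 k : R) (u v : C) : Fc * i1 * i2 = k ->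
  (RtoC Fc * ((u * RtoC i1) * (v * RtoC i2)))%C = (RtoC k * (u * v))%C.
Proof. intros <-. rewrite !RtoC_mult. ring. Qed.

Lemma fact_id1 m r : (1 <= m)%nat -> (r <= m - 1)%nat ->
  INR (fact m) * / INR (fact r) * / INR (fact (m - 1 - r)) = INR m * binom (m - 1) r.
Proof. intros Hm Hr. destruct m as [|m']; [lia|]. replace (S m' - 1)%nat with m' in * by lia.
  unfold binom, Binomial.C. change (fact (S m')) with (S m' * fact m')%nat. rewrite mult_INR.
  pose proof (INR_fact_neq_0 m'). pose proof (INR_fact_neq_0 r). pose proof (INR_fact_neq_0 (m' - r)).
  field. auto. Qed.

Lemma fact_id2 m j : (S (S j) <= m)%nat ->
  INR (fact m) * / INR (fact (S (S j))) * / INR (fact (S m - S (S j))) = / INR (m + 1) * binom (m + 1) (S (S j)).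
Proof. intros Hj. unfold binom, Binomial.C. replace (m + 1)%nat with (S m) by lia.
  replace (S m - S (S j))%nat with (m - S j)%nat by lia.
  change (fact (S m)) with (S m * fact m)%nat. rewrite mult_INR.
  pose proof (INR_fact_neq_0 m). pose proof (INR_fact_neq_0 (S (S j))). pose proof (INR_fact_neq_0 (m - S j)).
  assert (INR (S m) <> 0) by (rewrite S_INR; pose proof (pos_INR m); lra).
  field. auto. Qed.

Lemma phi_le k : (k <= n)%nat -> phi k = (c k * ifact k)%C.
Proof. intros Hk. unfold phi. rewrite (proj2 (Nat.leb_le k n)) by lia. reflexivity. Qed.

Lemma key m : (2 <= m <= n)%nat -> c 0%nat = 0%C ->
  (RtoC (INR (fact m)) * hh (S m))%C =
  (RtoC 2 * (c 1%nat * c m) + RtoC (/ INR (m + 1)) * S2 m - RtoC (INR m) * S1 m)%C.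
Proof.
  intros Hm Hc0. assert (Hp0 : phi 0%nat = 0%C) by (rewrite phi0; auto).
  destruct m as [|[|p]]; try lia.
  set (m := S (S p)).
  set (T := fun r => (phi r * phi (S m - r)%nat)%C).
  assert (Dec : conv phi phi (S m) = ((T 0%nat + (T 1%nat + csum p (fun j => T (S (S j))))) + T m + T (S m))%C).
  { unfold conv. fold T. change (csum (S (S m)) T) with (csum m T + T m + T (S m))%C.
    unfold m. rewrite csum_front, csum_front. reflexivity. }
  assert (T0 : T 0%nat = 0%C) by (unfold T; rewrite Hp0; ring).
  assert (Tm1 : T (S m) = 0%C) by (unfold T; rewrite Nat.sub_diag, Hp0; ring).
  assert (Tm : T m = T 1%nat) by (unfold T; replace (S m - m)%nat with 1%nat by lia;
     replace (S m - 1)%nat with m by lia; ring).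
  assert (Hi1 : phi 1%nat = c 1%nat) by (rewrite phi_le by lia; rewrite ifact1; ring).
  assert (E3 : (RtoC (INR (fact m)) * T 1%nat)%C = (c 1%nat * c m)%C).
  { unfold T. replace (S m - 1)%nat with m by lia. rewrite Hi1, (phi_le m) by lia.
    unfold ifact.
    transitivity (c 1%nat * c m * RtoC (INR (fact m) * / INR (fact m)))%C.
    { rewrite !RtoC_mult. ring. }
    rewrite Rinv_r by apply INR_fact_neq_0. ring. }
  assert (E1 : (RtoC (INR (fact m)) * csum p (fun j => T (S (S j))))%C = (RtoC (/ INR (m + 1)) * S2 m)%C).
  { unfold S2, csum_range. replace (m - 2)%nat with p by (unfold m; lia).
    rewrite <- !csum_scal. apply csum_ext. intros j Hj. unfold T.
    rewrite (phi_le (S (S j))) by (unfold m in *; lia). rewrite (phi_le (S m - S (S j))) by (unfold m in *; lia).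
    unfold ifact. rewrite (coef_eq _ _ _ _ _ _ (fact_id2 m j ltac:(unfold m in *; lia))).
    replace (m - (2 + j) + 1)%nat with (S m - S (S j))%nat by (unfold m in *; lia).
    rewrite RtoC_mult. simpl (2 + j)%nat. ring. }
  assert (E2 : (RtoC (INR (fact m)) * conv al be (S p))%C = (RtoC (INR m) * S1 m)%C).
  { unfold S1, csum_range, conv. replace (m - 0)%nat with (S (S p)) by (unfold m; lia).
    rewrite <- !csum_scal. apply csum_ext. intros r Hr. unfold al, be, ifact.
    rewrite (coef_eq _ _ _ _ _ _ (fact_id1 m r ltac:(unfold m in *; lia) ltac:(unfold m in *; lia))).
    assert (Ei : (m - r - 1 = S p - r)%nat) by (unfold m; lia).
    cbv beta. change (0 + r)%nat with r. rewrite Ei. rewrite RtoC_mult. ring. }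
  unfold hh. change (shift1 (shift1 (conv al be)) (S m)) with (conv al be (S p)).
  rewrite Dec, T0, Tm1, Tm. rewrite <- E1, <- E2, <- E3. ring.
Qed.

Lemma formm m : (2 <= m <= n)%nat -> c 0%nat = 0%C -> c 1%nat = RtoC (sqrt P0) ->
  (FORM m <-> hh (S m) = 0%C).
Proof.
  intros Hm Hc0 Hc1. pose proof (key m Hm Hc0) as K. rewrite Hc1 in K.
  unfold FORM. fold (S1 m). fold (S2 m). change (Re (a 0%nat * b 0%nat)) with P0.
  assert (Hk : kdelta m 1 = 0%nat) by (unfold kdelta; rewrite (proj2 (Nat.eqb_neq m 1)) by lia; reflexivity).
  rewrite Hk. replace (2 ^ (1 - 0)%nat * sqrt P0) with (2 * sqrt P0) by (simpl; ring).
  rewrite RtoC_mult.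
  pose proof sP0 as Hs.
  assert (Hd : (RtoC 2 * RtoC (sqrt P0))%C <> 0%C).
  { rewrite <- RtoC_mult. apply RtoC_neq0. lra. }
  assert (Hs0 : RtoC (sqrt P0) <> 0%C) by (apply RtoC_neq0; lra).
  assert (H20 : RtoC 2 <> 0%C) by (apply RtoC_neq0; lra).
  split.
  - intros Hf. apply (Cmult_eq0_l (RtoC (INR (fact m)))). apply RtoC_neq0, INR_fact_neq_0.
    rewrite K, Hf. field. repeat split; auto.
  - intros Hh. rewrite Hh in K.
    assert (K0 : (RtoC 2 * (RtoC (sqrt P0) * c m) + RtoC (/ INR (m + 1)) * S2 m - RtoC (INR m) * S1 m)%C = 0%C)
      by (rewrite <- K; ring).
    replace (c m) with ((RtoC 2 * (RtoC (sqrt P0) * c m)) / (RtoC 2 * RtoC (sqrt P0)))%C by (field; repeat split; auto).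
    f_equal.
    replace (RtoC 2 * (RtoC (sqrt P0) * c m))%C with
      ((RtoC 2 * (RtoC (sqrt P0) * c m) + RtoC (/ INR (m + 1)) * S2 m - RtoC (INR m) * S1 m)
       + (RtoC (INR m) * S1 m - RtoC (/ INR (m + 1)) * S2 m))%C by ring.
    rewrite K0. ring.
Qed.

Theorem core_equiv : littleo n (fun t => F t - G t)%C <-> (forall m, (m <= n)%nat -> FORM m).
Proof.
  split.
  - intros HL. destruct (dir1 HL) as [Hc0 [Hc1 Hh]]. intros m Hm. destruct m as [|[|m']].
    + apply form0; auto.
    + apply form1; apply Hc1; lia.
    + apply formm; auto. lia. apply Hc1; lia. apply Hh; lia.
  - intros Hf. assert (Hc0 : c 0%nat = 0%C) by (apply form0; apply Hf; lia).
    apply dir2; auto. intros Hn1.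
    assert (Hc1 : c 1%nat = RtoC (sqrt P0)) by (apply form1; apply Hf; auto).
    split; auto. intros k Hk. destruct k as [|[|[|m']]]; try lia.
    apply formm; auto. lia. apply Hf. lia.
Qed.

End Core.


Lemma conj_prod g z : Im (f_ww g z * f_wbwb g z)%C = 0 /\ 0 <= Re (f_ww g z * f_wbwb g z)%C.
Proof. rewrite f_ww_eq, f_wbwb_eq. simpl. split. ring.
  set (p := / 4 * (px (px g) z - py (py g) z)). set (q := / 4 * (px (py g) z + py (px g) z)).
  replace (p * p - - / 4 * (px (py g) z + py (px g) z) * q) with (p * p + q * q) by (unfold q; ring).
  pose proof (Rle_0_sqr p). pose proof (Rle_0_sqr q). unfold Rsqr in *. lra. Qed.

Lemma per_z (U : C -> Prop) (n : nat) (fm : nat -> C -> R) z :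
  loc_open U -> (forall m, (m <= n)%nat -> C2_on U (fm m)) -> U z ->
     Im (f_ww (fm 0%nat) z * f_wbwb (fm 0%nat) z)%C = 0 /\
     0 < Re (f_ww (fm 0%nat) z * f_wbwb (fm 0%nat) z)%C ->
  (littleo n (fun t => f_wwb (ftaylor fm n t) z
        - RtoC (t * sqrt (Re (f_ww (ftaylor fm n t) z * f_wbwb (ftaylor fm n t) z)%C)))%C
     <-> (forall m, (m <= n)%nat -> FORM (fun r => f_ww (fm r) z) (fun r => f_wbwb (fm r) z)
                                     (fun r => f_wwb (fm r) z) m)).
Proof.
  intros HU HC Hz Hp.
  pose proof (core_equiv n (fun r => f_ww (fm r) z) (fun r => f_wbwb (fm r) z) (fun r => f_wwb (fm r) z)
      (fun t => f_ww (ftaylor fm n t) z) (fun t => f_wbwb (ftaylor fm n t) z)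
      (fun t => f_wwb (ftaylor fm n t) z)
      (fun t => wwb_taylor U n fm t HU HC z Hz)
      (fun t => ww_taylor U n fm t HU HC z Hz)
      (fun t => wbwb_taylor U n fm t HU HC z Hz)
      (fun t => conj_prod _ z) Hp) as K.
  unfold G, Q in K. exact K.
Qed.

Theorem lemma9 (U : C -> Prop) (n : nat) (fm : nat -> C -> R) :
  jordan_domain U ->
  (forall m, (m <= n)%nat -> C2_on U (fm m)) ->
  (forall z, U z ->
     Im (f_ww (fm 0%nat) z * f_wbwb (fm 0%nat) z)%C = 0 /\
     0 < Re (f_ww (fm 0%nat) z * f_wbwb (fm 0%nat) z)%C) ->
  ( (* f_{w wbar} = t sqrt(f_ww f_wbwb) + o(t^n) as t -> 0, at every w *)
    (forall z, U z ->
       forall eps, 0 < eps -> exists delta, 0 < delta /\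
         forall t, 0 < Rabs t < delta ->
           Cmod (f_wwb (ftaylor fm n t) z
                 - RtoC (t * sqrt (Re (f_ww (ftaylor fm n t) z
                                       * f_wbwb (ftaylor fm n t) z)%C)))%C
           <= eps * Rabs t ^ n)
    <->
    (forall m, (m <= n)%nat -> forall z, U z ->
       f_wwb (fm m) z =
       ((RtoC (INR m) * csum_range 0 m
            (fun r => RtoC (binom (m - 1) r)
                      * f_ww (fm r) z * f_wbwb (fm (m - r - 1)%nat) z)
         - RtoC (/ INR (m + 1)) * csum_range 2 m
            (fun r => RtoC (binom (m + 1) r)
                      * f_wwb (fm r) z * f_wwb (fm (m - r + 1)%nat) z))
        / RtoC (2 ^ (1 - kdelta m 1)%nat
                * sqrt (Re (f_ww (fm 0%nat) z * f_wbwb (fm 0%nat) z)%C)))%C)).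
Proof.
  intros HJ HC Hpos. pose proof (jordan_open U HJ) as HU.
  split; intros H.
  - intros m Hm z Hz'. pose proof (per_z U n fm z HU HC Hz' (Hpos z Hz')) as K.
    destruct K as [K1 _]. unfold littleo in K1. specialize (K1 (H z Hz') m Hm).
    unfold FORM in K1. exact K1.
  - intros z Hz'. pose proof (per_z U n fm z HU HC Hz' (Hpos z Hz')) as K.
    destruct K as [_ K2]. unfold littleo in K2. apply K2.
    intros m Hm. unfold FORM. apply H; auto.
Qed.
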